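(* Let $\hat v$ be a rank-one discrete valuation on a complete field with valuation ring $R_{\hat v}$, maximal ideal $\mathfrak m_{\hat v}$, residue field $\Delta_{\hat v}$, containing a field $k$ of characteristic $0$ on which $\hat v$ is trivial, and let $\varphi:R_{\hat v}\to\Delta_{\hat v}$ be the natural homomorphism. Let $\mathbb F\subset R_{\hat v}$ and $\mathbb F'\subset\Delta_{\hat v}$ be subfields containing $k$ with $\varphi(\mathbb F)\subseteq \mathbb F'$, and let $\sigma:\mathbb F'\to\mathbb F$ be a $k$-homomorphism with $\varphi\circ\sigma=\mathrm{id}_{\mathbb F'}$. Let $\omega\in R_{\hat v}$ with $\hat v(\omega)=0$. If $\omega+\mathfrak m_{\hat v}$ is transcendental (resp. algebraic) over $\mathbb F'$, then there exists a $k$-section $\sigma':\Delta_{\hat v}\to R_{\hat v}$ of $\varphi$ (i.e. a $k$-homomorphism with $\varphi\circ\sigma'=\mathrm{id}$) extending $\sigma$ such that $\sigma'(\omega+\mathfrak m_{\hat v})$ is transcendental (resp. algebraic) over $\mathbb F$. *)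

(* Defs.v *)
From HB Require Import structures.
From mathcomp Require Import all_boot all_order all_algebra.
Set Implicit Arguments. Unset Strict Implicit. Unset Printing Implicit Defensive.
Import Order.TTheory GRing.Theory Num.Theory.
Local Open Scope ring_scope.

Definition is_subfield (L : fieldType) (S : pred L) : Prop :=
  [/\ 0 \in S, 1 \in S,
      (forall x y, x \in S -> y \in S -> x - y \in S),
      (forall x y, x \in S -> y \in S -> x * y \in S) &
      (forall x, x \in S -> x^-1 \in S)].

Definition algebraic_over (L : fieldType) (S : pred L) (x : L) : Prop :=
  exists2 p : {poly L}, (p != 0) && (p \is a polyOver S) & root p x.

(* v : K -> int is a rank-one discrete valuation on K (the value at 0 is
   irrelevant, v 0 is "+oo"); the value group is a nontrivial subgroup of Z. *)
Definition discrete_valuation (K : fieldType) (v : K -> int) : Prop :=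
  [/\ (forall x y, x != 0 -> y != 0 -> v (x * y) = v x + v y),
      (forall x y, x != 0 -> y != 0 -> x + y != 0 ->
         Order.min (v x) (v y) <= v (x + y)) &
      (exists x, (x != 0) && (v x != 0))].

Definition vge (K : fieldType) (v : K -> int) (x : K) (n : int) : bool :=
  (x == 0) || (n <= v x).

Definition complete_wrt (K : fieldType) (v : K -> int) : Prop :=
  forall u : nat -> K,
    (forall N : int, exists M : nat, forall p q : nat,
        (M <= p)%N -> (M <= q)%N -> vge v (u p - u q) N) ->
    exists l : K, forall N : int, exists M : nat, forall n : nat,
        (M <= n)%N -> vge v (u n - l) N.

Definition val_ring (K : fieldType) (v : K -> int) : pred K :=
  fun x => vge v x 0.
Definition max_ideal (K : fieldType) (v : K -> int) : pred K :=
  fun x => vge v x 1.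

(* phi : K -> Delta (only its restriction to R_v matters) is the natural
   homomorphism R_v -> R_v / m_v onto the residue field Delta: a surjective
   ring homomorphism R_v -> Delta whose kernel is m_v. *)
Definition residue_map (K Delta : fieldType) (v : K -> int) (phi : K -> Delta)
  : Prop :=
  [/\ phi 1 = 1,
      (forall x y, x \in val_ring v -> y \in val_ring v ->
         phi (x + y) = phi x + phi y),
      (forall x y, x \in val_ring v -> y \in val_ring v ->
         phi (x * y) = phi x * phi y),
      (forall z : Delta, exists2 x, x \in val_ring v & phi x = z) &
      (forall x, x \in val_ring v -> (phi x == 0) = (x \in max_ideal v))].

(* Main.v *)
Require Import Defs.
From HB Require Import structures.
From mathcomp Require Import all_boot all_order all_algebra.
From mathcomp Require Import zify ring.
From mathcomp Require Import boolp classical_sets.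
Import Order.TTheory GRing.Theory Num.Theory.
Local Open Scope ring_scope.

Lemma v_one {K : fieldType} {v : K -> int} : discrete_valuation v -> v 1 = 0.
Proof.
case=> Hm _ _; have := Hm 1 1 (oner_neq0 K) (oner_neq0 K); rewrite mulr1 => h.
lia.
Qed.

Lemma v_opp {K : fieldType} {v : K -> int} : discrete_valuation v ->
  forall x, x != 0 -> v (- x) = v x.
Proof.
move=> dv x x0; have h1 := v_one dv; case: dv => Hm _ _.
have m1 : (-1 : K) != 0 by rewrite oppr_eq0 oner_neq0.
have := Hm _ _ m1 m1; rewrite mulrNN mulr1 h1 => h2.
rewrite -mulN1r Hm //; move: h2; lia.
Qed.

Lemma vgeD {K : fieldType} {v : K -> int} : discrete_valuation v ->
  forall x y n, vge v x n -> vge v y n -> vge v (x + y) n.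
Proof.
case=> _ Hu _ x y n; rewrite /vge.
have [->|x0] := eqVneq x 0; first by rewrite add0r.
have [->|y0] := eqVneq y 0; first by rewrite addr0 (negbTE x0) => h _.
have [s0|s0] := eqVneq (x + y) 0; first by move=> *.
move=> /= hx hy; apply: le_trans (Hu _ _ x0 y0 s0).
by rewrite le_min hx hy.
Qed.

Lemma vgeM {K : fieldType} {v : K -> int} : discrete_valuation v ->
  forall x y n m, vge v x n -> vge v y m -> vge v (x * y) (n + m).
Proof.
case=> Hm _ _ x y n m; rewrite /vge.
have [->|x0] := eqVneq x 0; first by rewrite mul0r eqxx.
have [->|y0] := eqVneq y 0; first by rewrite mulr0 eqxx.
rewrite /= Hm // => hx hy; rewrite mulf_eq0 (negbTE x0) (negbTE y0) /=.
exact: lerD.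
Qed.

Lemma vgeN {K : fieldType} {v : K -> int} : discrete_valuation v ->
  forall x n, vge v (- x) n = vge v x n.
Proof.
move=> dv x n; rewrite /vge oppr_eq0.
have [//|x0] := eqVneq x 0.
by rewrite /= v_opp.
Qed.

Lemma vgeW {K : fieldType} {v : K -> int} :
  forall x n m, m <= n -> vge v x n -> vge v x m.
Proof.
move=> x n m mn; rewrite /vge => /orP[->//|h].
by rewrite (le_trans mn h) orbT.
Qed.

Lemma vgeB {K : fieldType} {v : K -> int} : discrete_valuation v ->
  forall x y n, vge v x n -> vge v y n -> vge v (x - y) n.
Proof. by move=> dv x y n hx hy; apply: vgeD => //; rewrite vgeN. Qed.

Lemma vge0 {K : fieldType} {v : K -> int} n : vge v 0 n.
Proof. by rewrite /vge eqxx. Qed.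

Lemma vge_unit {K : fieldType} {v : K -> int} : discrete_valuation v ->
  forall x, vge v x 0 -> ~~ vge v x 1 -> x != 0 /\ v x = 0.
Proof.
move=> dv x; rewrite /vge; have [->|x0] //= := eqVneq x 0.
move=> h1 h2; split=> //; lia.
Qed.

Lemma v_inv {K : fieldType} {v : K -> int} : discrete_valuation v ->
  forall x, x != 0 -> v (x^-1) = - v x.
Proof.
move=> dv x x0; have h1 := v_one dv; case: dv => Hm _ _.
have := Hm _ _ x0 (invr_neq0 x0); rewrite divff // h1; lia.
Qed.

Lemma vge_div {K : fieldType} {v : K -> int} : discrete_valuation v ->
  forall x u n, vge v x n -> u != 0 -> v u = 0 -> vge v (x / u) n.
Proof.
move=> dv x u n hx u0 vu.
have : vge v (u^-1) 0 by rewrite /vge v_inv // vu oppr0 lexx orbT.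
by move/(vgeM dv _ _ _ _ hx); rewrite addr0.
Qed.

Lemma vge_all0 {K : fieldType} {v : K -> int} x : (forall N, vge v x N) -> x = 0.
Proof.
move=> h; have := h (v x + 1); rewrite /vge => /orP[/eqP//|]; lia.
Qed.

Definition pover {K : fieldType} (A : K -> Prop) (p : {poly K}) := forall i, A p`_i.
Definition phiP {K D : fieldType} (phi : K -> D) (p : {poly K}) : {poly D} :=
  \poly_(i < size p) phi p`_i.

Lemma memR {K : fieldType} (v : K -> int) x : (x \in val_ring v) = vge v x 0.
Proof. by []. Qed.
Lemma memM {K : fieldType} (v : K -> int) x : (x \in max_ideal v) = vge v x 1.
Proof. by []. Qed.

Lemma R1 {K : fieldType} {v : K -> int} : discrete_valuation v -> vge v 1 0.
Proof. by move=> dv; rewrite /vge v_one // lexx orbT. Qed.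

Lemma RM {K : fieldType} {v : K -> int} : discrete_valuation v ->
  forall x y, vge v x 0 -> vge v y 0 -> vge v (x * y) 0.
Proof. by move=> dv x y hx hy; have := vgeM dv _ _ _ _ hx hy; rewrite addr0. Qed.

Lemma mRM {K : fieldType} {v : K -> int} : discrete_valuation v ->
  forall x y, vge v x 1 -> vge v y 0 -> vge v (x * y) 1.
Proof. by move=> dv x y hx hy; have := vgeM dv _ _ _ _ hx hy; rewrite addr0. Qed.

Lemma mR {K : fieldType} {v : K -> int} x : vge v x 1 -> vge v x 0.
Proof. by apply: vgeW. Qed.

Lemma Rmuln {K : fieldType} {v : K -> int} : discrete_valuation v ->
  forall x n, vge v x 0 -> vge v (x *+ n) 0.
Proof.
move=> dv x n hx; elim: n => [|n IH]; first by rewrite mulr0n vge0.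
by rewrite mulrS; apply: vgeD.
Qed.

Lemma Rexp {K : fieldType} {v : K -> int} : discrete_valuation v ->
  forall x n, vge v x 0 -> vge v (x ^+ n) 0.
Proof.
move=> dv x n hx; elim: n => [|n IH]; first by rewrite expr0 R1.
by rewrite exprS; apply: RM.
Qed.

Section dummy. End dummy.

Lemma phi0 {K D : fieldType} {v : K -> int} {phi : K -> D} :
  discrete_valuation v -> residue_map v phi -> phi 0 = 0.
Proof.
move=> dv [_ Ha _ _ _]; have := Ha 0 0 (vge0 _) (vge0 _).
by rewrite addr0 => /(congr1 (fun t => t - phi 0)); rewrite /= subrr addrK => /esym.
Qed.

Lemma phiD {K D : fieldType} {v : K -> int} {phi : K -> D} :
  residue_map v phi -> forall x y, vge v x 0 -> vge v y 0 -> phi (x + y) = phi x + phi y.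
Proof. by case=> _ Ha _ _ _ x y hx hy; apply: Ha. Qed.

Lemma phiM {K D : fieldType} {v : K -> int} {phi : K -> D} :
  residue_map v phi -> forall x y, vge v x 0 -> vge v y 0 -> phi (x * y) = phi x * phi y.
Proof. by case=> _ _ Ha _ _ x y hx hy; apply: Ha. Qed.

Lemma phiN {K D : fieldType} {v : K -> int} {phi : K -> D} :
  discrete_valuation v -> residue_map v phi -> forall x, vge v x 0 -> phi (- x) = - phi x.
Proof.
move=> dv rm x hx; have := phiD rm x (- x) hx; rewrite vgeN // => /(_ hx).
rewrite subrr (phi0 dv rm) => /eqP; rewrite eq_sym addr_eq0 => /eqP ->; by rewrite opprK.
Qed.

Lemma phiB {K D : fieldType} {v : K -> int} {phi : K -> D} :
  discrete_valuation v -> residue_map v phi -> forall x y, vge v x 0 -> vge v y 0 ->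
  phi (x - y) = phi x - phi y.
Proof.
by move=> dv rm x y hx hy; rewrite (phiD rm) ?(vgeN dv) ?(phiN dv rm).
Qed.

Lemma phi_eq0 {K D : fieldType} {v : K -> int} {phi : K -> D} :
  residue_map v phi -> forall x, vge v x 0 -> (phi x == 0) = vge v x 1.
Proof. by case=> _ _ _ _ H x hx; apply: H. Qed.

Lemma phi_eqP {K D : fieldType} {v : K -> int} {phi : K -> D} :
  discrete_valuation v -> residue_map v phi -> forall x y, vge v x 0 -> vge v y 0 ->
  (phi x == phi y) = vge v (x - y) 1.
Proof.
move=> dv rm x y hx hy; rewrite -(phi_eq0 rm) ?(phiB dv rm) ?subr_eq0 //.
exact: (vgeB dv).
Qed.

Lemma phi_muln {K D : fieldType} {v : K -> int} {phi : K -> D} :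
  discrete_valuation v -> residue_map v phi -> forall x n, vge v x 0 ->
  phi (x *+ n) = phi x *+ n.
Proof.
move=> dv rm x n hx; elim: n => [|n IH]; first by rewrite !mulr0n (phi0 dv rm).
by rewrite !mulrS (phiD rm) ?IH //; apply: (Rmuln dv).
Qed.

Lemma phi1 {K D : fieldType} {v : K -> int} {phi : K -> D} :
  residue_map v phi -> phi 1 = 1.
Proof. by case. Qed.

Lemma coef_phiP {K D : fieldType} {v : K -> int} {phi : K -> D} :
  discrete_valuation v -> residue_map v phi -> forall p i, (phiP phi p)`_i = phi p`_i.
Proof.
move=> dv rm p i; rewrite coef_poly; case: ltnP => // h.
by rewrite nth_default // (phi0 dv rm).
Qed.

Lemma pover_MXaddC {K : fieldType} {A : K -> Prop} {p c} :
  pover A (p * 'X + c%:P) -> A c /\ pover A p.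
Proof.
move=> h; split; first by have := h 0%N; rewrite coefD coefMX coefC /= add0r.
by move=> i; have := h i.+1; rewrite coefD coefMX coefC /= addr0.
Qed.

Lemma hornerR {K : fieldType} {v : K -> int} : discrete_valuation v ->
  forall p a, pover (fun x => vge v x 0) p -> vge v a 0 -> vge v p.[a] 0.
Proof.
move=> dv p a + ha; elim/poly_ind: p => [|p c IH] hp; first by rewrite horner0 vge0.
have [hc hp'] := pover_MXaddC hp.
rewrite hornerMXaddC; apply: vgeD => //; apply: RM => //; exact: IH.
Qed.

Lemma phiP_MXaddC {K D : fieldType} {v : K -> int} {phi : K -> D} :
  discrete_valuation v -> residue_map v phi -> forall p c,
  phiP phi (p * 'X + c%:P) = phiP phi p * 'X + (phi c)%:P.
Proof.
move=> dv rm p c; apply/polyP => i.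
rewrite (coef_phiP dv rm) !coefD !coefMX !coefC; case: i => [|i] /=.
  by rewrite !add0r.
by rewrite !addr0 (coef_phiP dv rm).
Qed.

Lemma phi_horner {K D : fieldType} {v : K -> int} {phi : K -> D} :
  discrete_valuation v -> residue_map v phi -> forall p a,
  pover (fun x => vge v x 0) p -> vge v a 0 -> phi p.[a] = (phiP phi p).[phi a].
Proof.
move=> dv rm p a + ha; elim/poly_ind: p => [|p c IH] hp.
  rewrite horner0 (phi0 dv rm); apply/esym.
  by rewrite /phiP size_poly0 poly_def big_ord0 horner0.
have [hc hp'] := pover_MXaddC hp.
rewrite (phiP_MXaddC dv rm) !hornerMXaddC (phiD rm) ?(phiM rm) ?IH //.
  exact: (hornerR dv).
by apply: (RM dv) => //; exact: (hornerR dv).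
Qed.

Lemma pover_deriv {K : fieldType} {v : K -> int} : discrete_valuation v ->
  forall p, pover (fun x => vge v x 0) p -> pover (fun x => vge v x 0) p^`().
Proof. by move=> dv p hp i; rewrite coef_deriv; apply: Rmuln. Qed.

Lemma phiP_deriv {K D : fieldType} {v : K -> int} {phi : K -> D} :
  discrete_valuation v -> residue_map v phi -> forall p,
  pover (fun x => vge v x 0) p -> phiP phi p^`() = (phiP phi p)^`().
Proof.
move=> dv rm p hp; apply/polyP => i.
by rewrite coef_deriv !(coef_phiP dv rm) coef_deriv (phi_muln dv rm).
Qed.

Lemma taylor1 {K : fieldType} {v : K -> int} : discrete_valuation v ->
  forall q a h, pover (fun x => vge v x 0) q -> vge v a 0 -> vge v h 0 ->
  exists r, vge v r 0 /\ q.[a + h] = q.[a] + h * r.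
Proof.
move=> dv q a h + ha hh; elim/poly_ind: q => [|p c IH] hq.
  by exists 0; rewrite !horner0 mulr0 addr0 vge0.
have [hc hp] := pover_MXaddC hq.
have [r1 [hr1 E1]] := IH hp.
exists (p.[a] + r1 * (a + h)); split.
  apply: (vgeD dv); first exact: (hornerR dv).
  by apply: (RM dv) => //; apply: (vgeD dv).
by rewrite !hornerMXaddC E1; ring.
Qed.

Lemma taylor2 {K : fieldType} {v : K -> int} : discrete_valuation v ->
  forall q a h, pover (fun x => vge v x 0) q -> vge v a 0 -> vge v h 0 ->
  exists r, vge v r 0 /\ q.[a + h] = q.[a] + h * q^`().[a] + h ^+ 2 * r.
Proof.
move=> dv q a h + ha hh; elim/poly_ind: q => [|p c IH] hq.
  by exists 0; rewrite deriv0 !horner0 !mulr0 !addr0 vge0.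
have [hc hp] := pover_MXaddC hq.
have [r2 [hr2 E2]] := IH hp.
have [r1 [hr1 E1]] := taylor1 dv p a h hp ha hh.
exists (r2 * a + r1); split.
  by apply: (vgeD dv) => //; apply: (RM dv).
rewrite derivMXaddC hornerD hornerMX !hornerMXaddC mulrDr {1}E2 E1; ring.
Qed.

Lemma hensel {K : fieldType} {v : K -> int} : discrete_valuation v -> complete_wrt v ->
  forall q a0, pover (fun x => vge v x 0) q -> vge v a0 0 ->
  vge v q.[a0] 1 -> ~~ vge v q^`().[a0] 1 ->
  exists a, [/\ vge v a 0, q.[a] = 0 & vge v (a - a0) 1].
Proof.
move=> dv cmp q a0 hq ha0 hf hd.
have hq' := pover_deriv dv q hq.
have dunit x : vge v x 0 -> vge v (x - a0) 1 -> ~~ vge v q^`().[x] 1.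
  move=> hx hxa; apply: contra hd => h1.
  have [r [hr E]] := taylor1 dv _ a0 (x - a0) hq' ha0 (mR _ hxa).
  move: E; rewrite addrC subrK => E.
  have -> : q^`().[a0] = q^`().[x] - (x - a0) * r by rewrite E addrK.
  by apply: (vgeB dv) => //; apply: (mRM dv).
pose f x := x - q.[x] / q^`().[x].
pose a n := iter n f a0.
have Inv n : [/\ vge v (a n) 0, vge v (a n - a0) 1 & vge v q.[a n] (n.+1)%:Z].
  elim: n => [|n [h1 h2 h3]]; first by rewrite /a /= subrr vge0 ha0 hf.
  have [d0 vd] := vge_unit dv _ (hornerR dv _ _ hq' h1) (dunit _ h1 h2).
  set x := a n in h1 h2 h3 d0 vd *.
  set h := - (q.[x] / q^`().[x]).
  have hh : vge v h (n.+1)%:Z by rewrite /h (vgeN dv); apply: (vge_div dv).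
  have hh0 : vge v h 0 by apply: vgeW hh.
  have -> : a n.+1 = x + h by rewrite /a iterS.
  split.
  - exact: (vgeD dv).
  - rewrite addrAC; apply: (vgeD dv) => //; apply: vgeW hh; lia.
  have [r [hr E]] := taylor2 dv q x h hq h1 hh0.
  have -> : q.[x + h] = h ^+ 2 * r.
    by rewrite E /h mulNr divfK // subrr add0r.
  have := vgeM dv _ _ _ _ (vgeM dv _ _ _ _ hh hh) hr.
  rewrite expr2; apply: vgeW; lia.
have step n : vge v (a n.+1 - a n) (n.+1)%:Z.
  have [h1 h2 h3] := Inv n.
  have [d0 vd] := vge_unit dv _ (hornerR dv _ _ hq' h1) (dunit _ h1 h2).
  rewrite /a iterS -/(a n) /f addrAC subrr add0r (vgeN dv).
  exact: (vge_div dv).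
have cauchyM M j : vge v (a (M + j)%N - a M) (M.+1)%:Z.
  elim: j => [|j IH]; first by rewrite addn0 subrr vge0.
  have -> : a (M + j.+1)%N - a M = (a (M + j).+1 - a (M + j)%N) + (a (M + j)%N - a M).
    by rewrite addnS addrA subrK.
  apply: (vgeD dv) => //; apply: vgeW (step _); lia.
have [l Hl] : exists l, forall N : int, exists M : nat, forall n : nat,
    (M <= n)%N -> vge v (a n - l) N.
  apply: cmp => N; exists `|N|%N => p r hp hr.
  have -> : a p - a r = (a p - a `|N|%N) - (a r - a `|N|%N) by rewrite opprB addrA subrK.
  rewrite -(subnKC hp) -(subnKC hr).
  apply: vgeW; last by apply: (vgeB dv); apply: cauchyM.
  lia.
have [M0 H0] := Hl 0.
have hl : vge v l 0.
  have -> : l = a M0 - (a M0 - l) by rewrite opprB addrC subrK.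
  by apply: (vgeB dv); [case: (Inv M0)|apply: H0].
exists l; split => //.
  apply: vge_all0 => N.
  have [M1 H1] := Hl N.
  pose n := maxn M1 `|N|%N.
  have [h1 h2 h3] := Inv n.
  have hln : vge v (l - a n) N by rewrite -opprB (vgeN dv); apply: H1; apply: leq_maxl.
  have hln0 : vge v (l - a n) 0.
    by rewrite -opprB (vgeN dv); apply: (vgeB dv) => //; case: (Inv n).
  have [r [hr E]] := taylor1 dv q (a n) (l - a n) hq h1 hln0.
  move: E; rewrite addrC subrK => ->.
  apply: (vgeD dv).
    apply: vgeW h3; have : (`|N| <= n)%N by apply: leq_maxr. lia.
  by have := vgeM dv _ _ _ _ hln hr; rewrite addr0.
have [M2 H2] := Hl 1.
have -> : l - a0 = (a M2 - a0) - (a M2 - l) by ring.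
by apply: (vgeB dv); [case: (Inv M2)|apply: H2].
Qed.

Lemma polyOverP' {K : fieldType} (S : pred K) (p : {poly K}) :
  0 \in S -> reflect (forall i, p`_i \in S) (p \is a polyOver S).
Proof.
move=> S0; apply: (iffP (all_nthP 0)) => [Sp i | Sp i _]; last exact: Sp.
by have [/Sp // | /(nth_default 0)->] := ltnP i (size p).
Qed.

Lemma ex_min_nat (P : nat -> Prop) :
  (exists n, P n) -> exists n, P n /\ forall m, P m -> (n <= m)%N.
Proof.
move=> [n Pn]; elim/ltn_ind: n Pn => n IH Pn.
case: (pselect (exists m, (m < n)%N /\ P m)) => [[m [lt Pm]]|H].
  exact: IH m lt Pm.
exists n; split => // m Pm; rewrite leqNgt; apply/negP => lt; apply: H.
by exists m.
Qed.

Lemma reduce {K : fieldType} (A : K -> Prop) :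
  A 0 -> (forall x y, A x -> A y -> A (x - y)) -> (forall x y, A x -> A y -> A (x * y)) ->
  (forall x, A x -> A x^-1) ->
  forall q y, pover A q -> q != 0 -> q.[y] = 0 ->
  forall g, pover A g -> exists r, [/\ pover A r, (size r < size q)%N & r.[y] = g.[y]].
Proof.
move=> A0 AB AM AV q y hq q0 qy g hg.
have sq : (0 < size q)%N by rewrite size_poly_gt0.
move: {2}(size g) (leqnn (size g)) => n; elim: n g hg => [|n IH] g hg hs.
  by exists g; split => //; apply: leq_ltn_trans hs sq.
have [lt|ge] := ltnP (size g) (size q); first by exists g.
pose d := (size g - size q)%N.
pose c := lead_coef g / lead_coef q.
pose g' := g - c%:P * ('X^d * q).
have Ac : A c by apply: AM; [rewrite lead_coefE; apply: hg | apply: AV; rewrite lead_coefE; apply: hq].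
have hg' : pover A g'.
  move=> i; rewrite /g' coefB coefCM coefXnM; apply: AB => //; apply: AM => //.
  by case: ifP.
have lqn : lead_coef q != 0 by rewrite lead_coef_eq0.
have sg' : (size g' <= n)%N.
  apply: leq_trans (_ : (size g).-1 <= n)%N; last by move: hs; case: (size g).
  apply/leq_sizeP => j hj.
  rewrite /g' coefB coefCM coefXnM.
  have -> : (j < d)%N = false by apply/negbTE; rewrite -leqNgt; apply: leq_trans hj; rewrite /d; lia.
  have [ej|nej] := eqVneq j (size g).-1.
    have -> : (j - d)%N = (size q).-1 by rewrite ej /d; lia.
    by rewrite ej -!lead_coefE /c divfK // subrr.
  have hj' : (size g <= j)%N.
    move: hj; rewrite leq_eqVlt => /orP[/eqP e|]; first by rewrite e eqxx in nej.
    by case: (size g).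
  rewrite !nth_default ?mulr0 ?subrr //.
  apply: (@leq_trans (size g - (size g - size q))); first by rewrite subKn.
  exact: leq_sub2r.
have [r [hr1 hr2 hr3]] := IH g' hg' sg'.
exists r; split => //; by rewrite hr3 /g' hornerD hornerN hornerCM hornerM qy !mulr0 oppr0 addr0.
Qed.

Local Open Scope classical_set_scope.

Lemma section_exists {K D : fieldType} (v : K -> int) (phi : K -> D)
  (F' : pred D) (sigma : D -> K) :
  discrete_valuation v -> complete_wrt v -> residue_map v phi ->
  (forall n, (0 < n)%N -> (n%:R : D) != 0) ->
  is_subfield F' ->
  (forall y, y \in F' -> vge v (sigma y) 0) ->
  sigma 1 = 1 ->
  (forall y z, y \in F' -> z \in F' -> sigma (y + z) = sigma y + sigma z) ->
  (forall y z, y \in F' -> z \in F' -> sigma (y * z) = sigma y * sigma z) ->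
  (forall y, y \in F' -> phi (sigma y) = y) ->
  exists s : {rmorphism D -> K}, [/\ forall u, vge v (s u) 0,
     forall u, phi (s u) = u & forall y, y \in F' -> s y = sigma y].
Proof.
move=> dv cmp rm ch0 [F0 F1 FB FM FV] sR s1 sD sM phis.
have sB y z : y \in F' -> z \in F' -> sigma (y - z) = sigma y - sigma z.
  by move=> Fy Fz; apply: (addIr (sigma z)); rewrite -sD ?FB // !subrK.
have s0 : sigma 0 = 0 by rewrite -(subrr (0 : D)) sB // subrr.
pose good (A : set K) := [/\ (forall x, A x -> vge v x 0),
   (forall x y, A x -> A y -> A (x - y)), (forall x y, A x -> A y -> A (x * y)),
   (forall x, A x -> vge v x 1 -> x = 0) & (forall y, y \in F' -> A (sigma y))].
pose P := fun A => A = set0 \/ good A.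
have [A [PA Amax]] : exists A, P A /\ forall B, A `<` B -> ~ P B.
  apply: Zorn_bigcup => Fam FP Ftot.
  have memgood X x : Fam X -> X x -> good X.
    by move=> FX Xx; case: (FP X FX) => // E; rewrite E in Xx.
  case: (pselect (exists X, Fam X /\ good X)) => [[X0 [FX0 gX0]]|nog].
  - right; split.
    + move=> x [X FX Xx]; have [h _ _ _ _] := memgood X x FX Xx; exact: h x Xx.
    + move=> x y [X FX Xx] [Y FY Yy].
      have gX := memgood _ _ FX Xx; have gY := memgood _ _ FY Yy.
      case: (Ftot X Y FX FY) => sub.
      * exists Y => //; case: gY => _ hB _ _ _; apply: hB => //; exact: sub.
      * exists X => //; case: gX => _ hB _ _ _; apply: hB => //; exact: sub.
    + move=> x y [X FX Xx] [Y FY Yy].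
      have gX := memgood _ _ FX Xx; have gY := memgood _ _ FY Yy.
      case: (Ftot X Y FX FY) => sub.
      * exists Y => //; case: gY => _ _ hM _ _; apply: hM => //; exact: sub.
      * exists X => //; case: gX => _ _ hM _ _; apply: hM => //; exact: sub.
    + move=> x [X FX Xx]; case: (memgood _ _ FX Xx) => _ _ _ h _; exact: h.
    + move=> y Fy; exists X0 => //; case: gX0 => _ _ _ _ h; exact: h.
  - left; apply: funext => x; apply: propext; split; last by [].
    move=> [X FX Xx]; apply: nog; exists X; split => //; exact: memgood FX Xx.
have gA : good A.
  case: PA => // A0; exfalso.
  pose B := fun x => exists2 y, y \in F' & x = sigma y.
  have gB : good B.
    split.
    - by move=> x [y Fy ->]; exact: sR.
    - by move=> x z [y Fy ->] [w Fw ->]; exists (y - w); [exact: FB | rewrite sB].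
    - by move=> x z [y Fy ->] [w Fw ->]; exists (y * w); [exact: FM | rewrite sM].
    - move=> x [y Fy ->] hm.
      have : phi (sigma y) == 0 by rewrite (phi_eq0 rm) // sR.
      by rewrite phis // => /eqP ->.
    - by move=> y Fy; exists y.
  apply: (Amax B); last by right.
  rewrite A0; split; first by [].
  by move=> sub; have := sub 1; rewrite /set0; apply; exists 1 => //; rewrite s1.
case: gA => AR AB AM Am AS.
have A1 : A 1 by rewrite -s1; apply: (AS).
have A0 : A 0 by rewrite -(subrr 1); apply: (AB).
have AD x y : A x -> A y -> A (x + y).
  move=> Ax Ay; have -> : x + y = x - (0 - y) by rewrite sub0r opprK.
  by apply: (AB) => //; apply: (AB).
have Amuln x n : A x -> A (x *+ n).
  by move=> Ax; elim: n => [|n IH]; [rewrite mulr0n | rewrite mulrS; apply: (AD)].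
have Amax' B : good B -> (forall x, A x -> B x) -> forall x, B x -> A x.
  move=> gB AB' x Bx; apply: contrapT => nAx; apply: (Amax B); last by right.
  by split => // BA; exact: nAx (BA x Bx).
have Aunit x : A x -> x != 0 -> ~~ vge v x 1.
  by move=> Ax x0; apply/negP => hm; move/eqP: x0; apply; apply: (Am).
have AV x : A x -> A x^-1.
  move=> Ax; have [->|x0] := eqVneq x 0; first by rewrite invr0.
  pose B := fun t => exists a c, [/\ A a, A c, c != 0 & t = a / c].
  have gB : good B.
    split.
    - move=> t [a [c [Aa Ac c0 ->]]].
      have [_ vc] := vge_unit dv c (AR c Ac) (Aunit c Ac c0).
      exact: (vge_div dv _ _ _ (AR a Aa) c0 vc).
    - move=> t t' [a [c [Aa Ac c0 ->]]] [a' [c' [Aa' Ac' c0' ->]]].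
      exists (a * c' - a' * c), (c * c'); split.
      + by apply: (AB); apply: (AM).
      + exact: (AM).
      + exact: mulf_neq0.
      + by field; rewrite c0 c0'.
    - move=> t t' [a [c [Aa Ac c0 ->]]] [a' [c' [Aa' Ac' c0' ->]]].
      exists (a * a'), (c * c'); split.
      + exact: (AM).
      + exact: (AM).
      + exact: mulf_neq0.
      + by field; rewrite c0 c0'.
    - move=> t [a [c [Aa Ac c0 ->]]] hm.
      have : a = 0.
        apply: (Am) => //; have -> : a = a / c * c by rewrite divfK.
        exact: (mRM dv _ _ hm (AR c Ac)).
      by move=> ->; rewrite mul0r.
    - by move=> y Fy; exists (sigma y), 1; split => //; rewrite ?oner_neq0 ?divr1 //; apply: (AS).
  apply: (Amax' B gB).
    by move=> t At; exists t, 1; split => //; rewrite ?oner_neq0 ?divr1.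
  by exists 1, x; split => //; rewrite div1r.
have pC c : A c -> pover A c%:P.
  by move=> Ac i; rewrite coefC; case: (i == 0%N).
have pX : pover A 'X.
  by move=> i; rewrite coefX; case: (i == 1%N).
have pB g1 g2 : pover A g1 -> pover A g2 -> pover A (g1 - g2).
  by move=> h1 h2 i; rewrite coefB; apply: (AB).
have pM g1 g2 : pover A g1 -> pover A g2 -> pover A (g1 * g2).
  move=> h1 h2 i; rewrite coefM; apply: (big_ind A) => //.
  by move=> j _; apply: (AM).
have pR g : pover A g -> pover (fun x => vge v x 0) g.
  by move=> h i; apply: (AR).
have ext y : vge v y 0 -> ~ A y ->
    (forall g, pover A g -> vge v g.[y] 1 -> g.[y] = 0) -> False.
  move=> Ry nAy hg.
  pose B := fun t => exists2 g, pover A g & t = g.[y].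
  have gB : good B.
    split.
    - by move=> t [g hgA ->]; apply: (hornerR dv) => //; apply: pR.
    - move=> t t' [g1 h1 ->] [g2 h2 ->]; exists (g1 - g2); first exact: pB.
      by rewrite hornerD hornerN.
    - move=> t t' [g1 h1 ->] [g2 h2 ->]; exists (g1 * g2); first exact: pM.
      by rewrite hornerM.
    - by move=> t [g hgA ->]; apply: hg.
    - by move=> u Fu; exists (sigma u)%:P; [apply: pC; apply: (AS) | rewrite hornerC].
  apply: nAy; apply: (Amax' B gB).
    by move=> t At; exists t%:P; [exact: pC | rewrite hornerC].
  by exists 'X; [exact: pX | rewrite hornerX].
have [_ _ _ rsurj _] := rm.
pose PZ u := exists x, A x /\ phi x = u.
have phiP_PA g : pover A g -> pover PZ (phiP phi g).
  by move=> hg i; exists g`_i; split; [exact: hg | rewrite (coef_phiP dv rm)].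
have phiP_eq0 g : pover A g -> phiP phi g = 0 -> g = 0.
  move=> hg e; apply/polyP => i; rewrite coef0; apply: (Am); first exact: hg.
  have := AR _ (hg i) => hgi.
  by rewrite -(phi_eq0 rm) // -(coef_phiP dv rm) e coef0.
have phiP_root g y z : pover A g -> vge v y 0 -> phi y = z -> vge v g.[y] 1 ->
    (phiP phi g).[z] = 0.
  move=> hg Ry <- hm; have gR := pR g hg; rewrite -(phi_horner dv rm) //.
  by apply/eqP; rewrite (phi_eq0 rm) // (hornerR dv).
have surj z : exists x, A x /\ phi x = z.
  apply: contrapT => nz.
  have [y0 Ry0 py0] := rsurj z.
  rewrite memR in Ry0.
  case: (pselect (exists p, [/\ p != 0, pover PZ p & p.[z] = 0])) => [alg|tr].
  - have [n [[p [p0 pp pz sp]] pmin]] : exists n, (exists p, [/\ p != 0, pover PZ p, p.[z] = 0 & size p = n])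
         /\ forall m, (exists p, [/\ p != 0, pover PZ p, p.[z] = 0 & size p = m]) -> (n <= m)%N.
      by apply: ex_min_nat; case: alg => p [a b c]; exists (size p), p.
    subst n.
    have pmin' p' : p' != 0 -> pover PZ p' -> p'.[z] = 0 -> (size p <= size p')%N.
      by move=> a b c; apply: pmin; exists p'.
    have PAmuln u k : PZ u -> PZ (u *+ k).
      by move=> [x [Ax <-]]; exists (x *+ k); split; [exact: Amuln | rewrite (phi_muln dv rm) //; exact: (AR)].
    have PA0 : PZ 0 by exists 0; split => //; rewrite (phi0 dv rm).
    have [lift hlift] : {lift : D -> K & forall u, PZ u -> A (lift u) /\ phi (lift u) = u}.
      apply: (@choice _ _ (fun u l => PZ u -> A l /\ phi l = u)) => u; case: (pselect (PZ u)) => [[x hx]|nP]; first by exists x.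
      by exists 0.
    pose q := \poly_(i < size p) lift p`_i.
    have hq : pover A q.
      move=> i; rewrite coef_poly; case: ltnP => _; last exact: A0.
      exact: (hlift _ (pp i)).1.
    have phiq : phiP phi q = p.
      apply/polyP => i; rewrite (coef_phiP dv rm) coef_poly; case: ltnP => h.
        exact: (hlift _ (pp i)).2.
      by rewrite (phi0 dv rm) nth_default.
    have q0 : q != 0.
      apply: contraNneq p0 => e; apply/eqP/polyP => i.
      by rewrite -phiq (coef_phiP dv rm) e !coef0 (phi0 dv rm).
    have sq : (size q <= size p)%N by apply: size_poly.
    have sp2 : (1 < size p)%N.
      rewrite ltnNge; apply/negP => h; move: (size1_polyC h) => ep.
      move: pz; rewrite ep hornerC => e0; move/eqP: p0; apply.
      by rewrite ep e0.
    have lp0 : lead_coef p != 0 by rewrite lead_coef_eq0.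
    have dp0 : p^`() != 0.
      apply/eqP => e; have := congr1 (fun r : {poly D} => r`_((size p).-2)) e.
      rewrite coef_deriv coef0.
      have -> : ((size p).-2.+1 = (size p).-1)%N by move: sp2; case: (size p) => [|[|k]].
      rewrite -mulr_natr -lead_coefE => /eqP; rewrite mulf_eq0 (negbTE lp0) /=.
      by apply/negP; apply: ch0; move: sp2; case: (size p) => [|[|k]].
    have dpP : pover PZ p^`() by move=> i; rewrite coef_deriv; apply: PAmuln.
    have dpz : p^`().[z] != 0.
      apply/eqP => e; have := pmin' _ dp0 dpP e.
      by rewrite leqNgt lt_size_deriv.
    have qR := pR q hq.
    have qdR := pover_deriv dv q qR.
    have hq0 := hornerR dv q y0 qR Ry0.
    have hq1 := hornerR dv _ y0 qdR Ry0.
    have h1 : vge v q.[y0] 1.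
      rewrite -(phi_eq0 rm) // (phi_horner dv rm) // phiq py0.
      by rewrite pz.
    have h2 : ~~ vge v q^`().[y0] 1.
      rewrite -(phi_eq0 rm) //.
      by rewrite (phi_horner dv rm) // (phiP_deriv dv rm q qR) phiq py0.
    have [y [Ry qy ym]] := hensel dv cmp q y0 qR Ry0 h1 h2.
    have py : phi y = z.
      by apply/eqP; rewrite -py0 (phi_eqP dv rm).
    apply: (ext y Ry); first by move=> Ay; apply: nz; exists y.
    move=> g hg hm.
    have [r [hr sr ry]] := reduce A A0 AB AM AV q y hq q0 qy g hg.
    rewrite -ry in hm *.
    have e := phiP_root r y z hr Ry py hm.
    have g0 : phiP phi r = 0.
      apply: contrapT => ne.
      have := pmin' _ (introN eqP ne) (phiP_PA r hr) e.
      have := size_poly (size r) (fun i => phi r`_i).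
      rewrite -/(phiP phi r) => s1' s2'.
      have := leq_trans s2' s1'; rewrite leqNgt => /negP; apply.
      exact: leq_trans sr sq.
    by rewrite (phiP_eq0 r hr g0) horner0.
  - apply: (ext y0 Ry0); first by move=> Ay; apply: nz; exists y0.
    move=> g hg hm.
    have e := phiP_root g y0 z hg Ry0 py0 hm.
    have g0 : phiP phi g = 0.
      apply: contrapT => ne; apply: tr; exists (phiP phi g); split => //.
        exact/eqP.
      exact: phiP_PA.
    by rewrite (phiP_eq0 g hg g0) horner0.
have [s hs] : {s : D -> K & forall u, A (s u) /\ phi (s u) = u}.
  exact: (@choice _ _ (fun u x => A x /\ phi x = u) surj).
have inj a b : A a -> A b -> phi a = phi b -> a = b.
  move=> Aa Ab e; apply/eqP; rewrite -subr_eq0; apply/eqP; apply: (Am); first exact: AB.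
  have Ra := AR _ Aa; have Rb := AR _ Ab.
  by rewrite -(phi_eq0 rm) ?(phiB dv rm) ?e ?subrr //; apply: (vgeB dv).
have sB' : forall x y, s (x - y) = s x - s y.
  move=> x y; apply: inj; [exact: (hs _).1 | apply: (AB); exact: (hs _).1 |].
  have R1 := AR _ (hs x).1; have R2 := AR _ (hs y).1.
  by rewrite (phiB dv rm) // !(hs _).2.
have s1' : s 1 = 1.
  by apply: inj; [exact: (hs _).1 | exact: A1 | rewrite (hs _).2 (phi1 rm)].
have sM' : forall x y, s (x * y) = s x * s y.
  move=> x y; apply: inj; [exact: (hs _).1 | apply: (AM); exact: (hs _).1 |].
  have R1 := AR _ (hs x).1; have R2 := AR _ (hs y).1.
  by rewrite (phiM rm) // !(hs _).2.
exists (HB.pack_for {rmorphism D -> K} s (GRing.isZmodMorphism.Build _ _ s sB')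
          (GRing.isMonoidMorphism.Build _ _ s (s1', sM'))).
split => /=.
- by move=> u; apply: AR; exact: (hs u).1.
- by move=> u; exact: (hs u).2.
- move=> y Fy; apply: inj; [exact: (hs y).1 | exact: AS | by rewrite (hs y).2 phis].
Qed.

Local Close Scope classical_set_scope.

Theorem proposition5
  (K Delta : fieldType) (v : K -> int) (phi : K -> Delta)
  (k F : pred K) (F' : pred Delta) (sigma : Delta -> K) (omega : K) :
  (* hat v : rank-one discrete valuation on the complete field K *)
  discrete_valuation v -> complete_wrt v ->
  (* Delta is the residue field, phi : R -> Delta the natural map *)
  residue_map v phi ->
  (* k : subfield of characteristic 0 on which v is trivial *)
  is_subfield k -> [pchar K] =i pred0 ->
  (forall c, c \in k -> c != 0 -> v c = 0) ->
  (* F subfield of K contained in R and containing k *)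
  is_subfield F -> {subset F <= val_ring v} -> {subset k <= F} ->
  (* F' subfield of Delta containing (the image of) k *)
  is_subfield F' -> (forall c, c \in k -> phi c \in F') ->
  (forall x, x \in F -> phi x \in F') ->
  (* sigma : F' -> F is a k-homomorphism with phi \o sigma = id *)
  (forall y, y \in F' -> sigma y \in F) ->
  sigma 1 = 1 ->
  (forall y z, y \in F' -> z \in F' -> sigma (y + z) = sigma y + sigma z) ->
  (forall y z, y \in F' -> z \in F' -> sigma (y * z) = sigma y * sigma z) ->
  (forall c, c \in k -> sigma (phi c) = c) ->
  (forall y, y \in F' -> phi (sigma y) = y) ->
  (* omega in R with v(omega) = 0 *)
  omega != 0 -> v omega = 0 ->
  (~ algebraic_over F' (phi omega) ->
     exists sigma' : {rmorphism Delta -> K},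
       [/\ (forall y, sigma' y \in val_ring v),
           (forall y, phi (sigma' y) = y),
           (forall c, c \in k -> sigma' (phi c) = c),
           (forall y, y \in F' -> sigma' y = sigma y) &
           ~ algebraic_over F (sigma' (phi omega))]) /\
  (algebraic_over F' (phi omega) ->
     exists sigma' : {rmorphism Delta -> K},
       [/\ (forall y, sigma' y \in val_ring v),
           (forall y, phi (sigma' y) = y),
           (forall c, c \in k -> sigma' (phi c) = c),
           (forall y, y \in F' -> sigma' y = sigma y) &
           algebraic_over F (sigma' (phi omega))]).
Proof.
move=> dv cmp rm ksub ch kv Fsub FR kF F'sub kF' FF' sF s1 sD sM sk phis om0 vom.
have [k0 k1 kB kM kV] := ksub.
have [F0 F1 FB FM FV] := Fsub.
have [F'0 F'1 F'B F'M F'V] := F'sub.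
have knat n : (n%:R : K) \in k.
  elim: n => [|n IH]; first by rewrite mulr0n -(subrr (1 : K)); apply: (kB).
  have -> : (n.+1%:R : K) = n%:R - (0 - 1) by rewrite sub0r opprK mulrS addrC.
  by apply: (kB) => //; apply: (kB).
move/pcharf0P: ch => ch.
have ch0 : forall n, (0 < n)%N -> (n%:R : Delta) != 0.
  move=> n n0.
  have nz : (n%:R : K) != 0 by rewrite ch -lt0n.
  have vn := kv _ (knat n) nz.
  have R0 : vge v (n%:R : K) 0 by rewrite /vge vn lexx orbT.
  have := phi_muln dv rm 1 n (R1 dv); rewrite (phi1 rm) => <-.
  by rewrite (phi_eq0 rm) // /vge (negbTE nz) vn.
have sR y : y \in F' -> vge v (sigma y) 0 by move=> Fy; exact: FR _ (sF y Fy).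
have [s [sRv sphi sext]] := section_exists v phi F' sigma dv cmp rm ch0 F'sub sR s1 sD sM phis.
have omR : vge v omega 0 by rewrite /vge vom lexx orbT.
have sk' : forall c, c \in k -> s (phi c) = c.
  by move=> c kc; rewrite sext ?kF' //; exact: sk.
have FRv x : x \in F -> vge v x 0 by move=> Fx; exact: FR _ Fx.
have phiF_neq0 x : x \in F -> x != 0 -> phi x != 0.
  move=> Fx x0; apply/eqP => e.
  have := phiM rm x x^-1 (FRv _ Fx) (FRv _ (FV _ Fx)).
  rewrite divff // (phi1 rm) e mul0r => /eqP; by rewrite oner_eq0.
split.
- move=> nalg; exists s; split => //.
  move=> [p /andP[p0 pF] pr]; apply: nalg.
  have pFc := (elimT (polyOverP' F p F0) pF).
  have pR : pover (fun x => vge v x 0) p by move=> i; apply: (FRv).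
  exists (phiP phi p).
    apply/andP; split.
      apply/eqP => e; have := congr1 (fun r : {poly Delta} => r`_((size p).-1)) e.
      rewrite (coef_phiP dv rm) coef0 -lead_coefE; apply/eqP; apply: (phiF_neq0).
        by rewrite lead_coefE.
      by rewrite lead_coef_eq0.
    by apply/(polyOverP' F' _ F'0) => i; rewrite (coef_phiP dv rm); apply: (FF').
  rewrite /root -(sphi (phi omega)) -(phi_horner dv rm) //.
  by rewrite (rootP pr) (phi0 dv rm).
- move=> [p /andP[p0 pF'] pr]; exists s; split => //.
  have pFc := (elimT (polyOverP' F' p F'0) pF').
  exists (map_poly s p).
    apply/andP; split; first by rewrite map_poly_eq0.
    by apply/(polyOverP' F _ F0) => i; rewrite coef_map /= sext //; apply: (sF).
  by rewrite /root horner_map (rootP pr) rmorph0.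
Qed.
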